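(* Let $X$ be a set and let $T:\mathcal P(X)\to\mathcal P(X)$ be an order reversing quasi involution. Then there exists a symmetric function $c:X\times X\to\{-1,1\}$ (i.e. $c(x,y)=c(y,x)$ for all $x,y\in X$) such that for every $K\subseteq X$, \[ TK=K^c:=\{y\in X:\ \inf_{x\in K}c(x,y)\ge 0\}. \]
   Context: $\mathcal P(X)$ denotes the power set of $X$. A map $T:\mathcal P(X)\to\mathcal P(X)$ is an order reversing quasi involution if for all $K,L\subseteq X$: (i) $K\subseteq TTK$, and (ii) $L\subseteq K$ implies $TK\subseteq TL$. The infimum over the empty set is $+\infty$, so $\emptyset^c=X$. *)

(* Defs.v *)
From Stdlib Require Import ZArith.
Open Scope Z_scope.

Definition subset {X : Type} (K L : X -> Prop) : Prop := forall x, K x -> L x.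
Definition set_eq {X : Type} (K L : X -> Prop) : Prop := forall x, K x <-> L x.

Definition order_reversing_quasi_involution {X : Type}
  (T : (X -> Prop) -> (X -> Prop)) : Prop :=
  (forall K, subset K (T (T K))) /\
  (forall K L, subset L K -> subset (T K) (T L)).

(* K^c = { y | inf_{x in K} c(x,y) >= 0 }; since c takes values in a finite
   set the infimum is attained (or is +oo for K empty), so this is
   { y | forall x in K, c x y >= 0 }. *)
Definition cost_polar {X : Type} (c : X -> X -> Z) (K : X -> Prop) : X -> Prop :=
  fun y => forall x, K x -> 0 <= c x y.

(* Main.v *)
Require Import Defs.
From Stdlib Require Import ZArith.
From Stdlib Require Import ClassicalEpsilon Lia.
Open Scope Z_scope.

Theorem theorem1p3 (X : Type) (T : (X -> Prop) -> (X -> Prop))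
  (HT : order_reversing_quasi_involution T) :
  exists c : X -> X -> Z,
    (forall x y, c x y = -1 \/ c x y = 1) /\
    (forall x y, c x y = c y x) /\
    (forall K : X -> Prop, set_eq (T K) (cost_polar c K)).
Proof.
  destruct HT as [H1 H2].
  assert (Hsym : forall x y, T (fun z => z = x) y -> T (fun z => z = y) x).
  { intros x y Hy.
    apply (H2 (T (fun z => z = x)) (fun z => z = y)); [|apply H1; reflexivity].
    intros z ->; exact Hy. }
  exists (fun x y => if excluded_middle_informative (T (fun z => z = x) y) then 1 else -1).
  split; [|split].
  - intros x y; destruct excluded_middle_informative; auto.
  - intros x y; do 2 destruct excluded_middle_informative; auto;
      exfalso; eauto.
  - intros K y; unfold cost_polar; split.
    + intros Hy x Hx. destruct excluded_middle_informative as [|n]; [lia|].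
      exfalso; apply n. apply (H2 K (fun z => z = x)); [intros z ->; exact Hx| exact Hy].
    + intros Hc.
      assert (HK : subset K (T (fun z => z = y))).
      { intros x Hx. specialize (Hc x Hx).
        destruct excluded_middle_informative as [t|]; [|lia]. apply Hsym; exact t. }
      apply (H2 _ _ HK). apply H1; reflexivity.
Qed.
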